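(* Let $\chi:T\to\overline{\mathbf F}_p^\times$ be a smooth character with $\chi\neq\chi^s$. Then $\mathrm{Hom}_P(\mathrm{Ind}_P^G\chi,\mathrm{Ind}_P^G\chi)=\mathrm{Hom}_G(\mathrm{Ind}_P^G\chi,\mathrm{Ind}_P^G\chi)$.
   Context: $F$ non-Archimedean local field of residual characteristic $p$, $G=\mathrm{GL}_2(F)$, $P$ the upper triangular Borel subgroup, $U$ its unipotent radical, $T$ the diagonal torus; characters of $T$ are viewed as characters of $P$ via $P\to P/U\cong T$. $\chi^s(\mathrm{diag}(a,d))=\chi(\mathrm{diag}(d,a))$. $\mathrm{Ind}_P^G\chi$ is the space of locally constant $f:G\to\overline{\mathbf F}_p$ with $f(bg)=\chi(b)f(g)$ for $b\in P$, with $G$ acting by right translation. *)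

(* Defs.v *)
From mathcomp Require Import all_boot all_order all_algebra.
Set Implicit Arguments. Unset Strict Implicit. Unset Printing Implicit Defensive.
Import Order.TTheory GRing.Theory Num.Theory.
Local Open Scope ring_scope.

(* A non-Archimedean local field of residual characteristic p: a field F
   with a discrete (normalized, surjective onto Z) valuation, complete for
   it, whose residue field O/m is finite of characteristic p.
   The valuation [nlf_val] is only meaningful on nonzero elements;
   [vge L x n] means "v(x) >= n", with v(0) = +oo. *)
Record nonarch_local_field (F : fieldType) (p : nat) := NLF {
  nlf_val : F -> int;
  nlf_valM : forall x y, x != 0 -> y != 0 -> nlf_val (x * y) = nlf_val x + nlf_val y;
  nlf_valD : forall x y, x != 0 -> y != 0 -> x + y != 0 ->
     Num.min (nlf_val x) (nlf_val y) <= nlf_val (x + y);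
  nlf_unif : exists w : F, w != 0 /\ nlf_val w = 1;
  nlf_complete : forall u : nat -> F,
     (forall n : int, exists N : nat, forall i j : nat, (N <= i)%N -> (N <= j)%N ->
          u i - u j = 0 \/ n <= nlf_val (u i - u j)) ->
     exists l : F, forall n : int, exists N : nat, forall i : nat, (N <= i)%N ->
          u i - l = 0 \/ n <= nlf_val (u i - l);
  nlf_residue_finite : exists s : seq F,
     forall x : F, (x = 0 \/ 0 <= nlf_val x) ->
       exists2 a, a \in s & (a = 0 \/ 0 <= nlf_val a) /\
                            (x - a = 0 \/ 1 <= nlf_val (x - a));
  nlf_prime : prime p;
  nlf_resid_char : (p%:R : F) = 0 \/ 1 <= nlf_val (p%:R : F)
}.

Definition vge (F : fieldType) (p : nat) (L : nonarch_local_field F p)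
  (x : F) (n : int) : Prop := x = 0 \/ n <= nlf_val L x.

Definition inG (F : fieldType) (g : 'M[F]_2) : Prop := \det g != 0.

Definition inP (F : fieldType) (b : 'M[F]_2) : Prop :=
  \det b != 0 /\ b 1 0 = 0.

(* chi a d = chi(diag(a,d)), for a, d in F^x. *)
Definition smooth_character (F : fieldType) (p : nat) (L : nonarch_local_field F p)
  (C : fieldType) (chi : F -> F -> C) : Prop :=
  (forall a d, a != 0 -> d != 0 -> chi a d != 0) /\
  (forall a d a' d', a != 0 -> d != 0 -> a' != 0 -> d' != 0 ->
      chi (a * a') (d * d') = chi a d * chi a' d') /\
  (exists n : int, forall a d, a != 0 -> d != 0 ->
      vge L (a - 1) n -> vge L (d - 1) n -> chi a d = 1).

Definition chi_s (F C : Type) (chi : F -> F -> C) : F -> F -> C :=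
  fun a d => chi d a.

Definition char_eq (F : fieldType) (C : Type) (chi1 chi2 : F -> F -> C) : Prop :=
  forall a d : F, a != 0 -> d != 0 -> chi1 a d = chi2 a d.

(* Functions on G are represented as functions on 2x2 matrices, vanishing
   off G. f is in Ind_P^G chi iff f(bg) = chi(b) f(g) for b in P, g in G,
   and f is locally constant on G. *)
Definition inInd (F : fieldType) (p : nat) (L : nonarch_local_field F p)
  (C : fieldType) (chi : F -> F -> C) (f : 'M[F]_2 -> C) : Prop :=
  (forall g, ~ inG g -> f g = 0) /\
  (forall b g, inP b -> inG g -> f (b *m g) = chi (b 0 0) (b 1 1) * f g) /\
  (forall g, inG g -> exists n : int, forall h, inG h ->
       (forall i j, vge L (h i j - g i j) n) -> f h = f g).

Definition rho (F : fieldType) (C : Type) (g : 'M[F]_2) (f : 'M[F]_2 -> C)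
  : 'M[F]_2 -> C := fun x => f (x *m g).

Definition isHom (F : fieldType) (p : nat) (L : nonarch_local_field F p)
  (C : fieldType) (chi : F -> F -> C) (H : 'M[F]_2 -> Prop)
  (phi : ('M[F]_2 -> C) -> ('M[F]_2 -> C)) : Prop :=
  (forall f, inInd L chi f -> inInd L chi (phi f)) /\
  (forall (c : C) f1 f2, inInd L chi f1 -> inInd L chi f2 ->
      phi (fun x => c * f1 x + f2 x) = (fun x => c * phi f1 x + phi f2 x)) /\
  (forall h f, H h -> inInd L chi f -> phi (rho h f) = rho h (phi f)).

(* Main.v *)
Require Import Defs.
From mathcomp Require Import all_boot all_order all_algebra.
Import GRing.Theory.
Local Open Scope ring_scope.
From mathcomp Require Import boolp.
From mathcomp Require Import zify ring.
From Stdlib Require Import FunctionalExtensionality Classical.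
Set Implicit Arguments. Unset Strict Implicit. Unset Printing Implicit Defensive.
Import Order.TTheory GRing.Theory Num.Theory.
Local Open Scope ring_scope.

Section Val.
Variables (F : fieldType) (p : nat) (L : nonarch_local_field F p).
Local Notation v := (nlf_val L).
Local Notation vge := (vge L).

Lemma v1 : v 1 = 0.
Proof.
have h := nlf_valM L (oner_neq0 F) (oner_neq0 F); rewrite mulr1 in h.
by apply: (addrI (v 1)); rewrite addr0 -h.
Qed.

Lemma vN1 : v (-1) = 0.
Proof.
have h1 : (-1 : F) != 0 by rewrite oppr_eq0 oner_neq0.
have := nlf_valM L h1 h1; rewrite mulrNN mulr1 v1 => h; lia.
Qed.

Lemma vN x : x != 0 -> v (- x) = v x.
Proof.
move=> hx; have h1 : (-1 : F) != 0 by rewrite oppr_eq0 oner_neq0.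
by rewrite -mulN1r (nlf_valM L h1 hx) vN1 add0r.
Qed.

Lemma vV x : x != 0 -> v x^-1 = - v x.
Proof.
move=> hx; have hi : x^-1 != 0 by rewrite invr_eq0.
have := nlf_valM L hx hi; rewrite mulfV // v1 => h; lia.
Qed.

Lemma vM x y : x != 0 -> y != 0 -> v (x * y) = v x + v y.
Proof. exact: nlf_valM. Qed.

Lemma vge0 n : vge 0 n.
Proof. by left. Qed.

Lemma vgeP x n : x != 0 -> vge x n <-> n <= v x.
Proof. by move=> hx; split; [case=> [/eqP h|//]; rewrite h in hx|right]. Qed.

Lemma vge_le m n x : m <= n -> vge x n -> vge x m.
Proof. by move=> hmn [->|h]; [left|right; apply: le_trans h]. Qed.

Lemma vgeN x n : vge x n -> vge (- x) n.
Proof.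
case=> [->|h]; first by rewrite oppr0; left.
case: (eqVneq x 0) => [->|hx]; first by rewrite oppr0; left.
by right; rewrite vN.
Qed.

Lemma vgeN' x n : vge (- x) n -> vge x n.
Proof. by move=> /vgeN; rewrite opprK. Qed.

Lemma vgeD x y n : vge x n -> vge y n -> vge (x + y) n.
Proof.
case=> [->|hx]; first by rewrite add0r.
case=> [->|hy]; first by rewrite addr0; right.
case: (eqVneq x 0) => [->|x0]; first by rewrite add0r; right.
case: (eqVneq y 0) => [->|y0]; first by rewrite addr0; right.
case: (eqVneq (x + y) 0) => [->|s0]; first by left.
right; apply: le_trans (nlf_valD L x0 y0 s0).
by rewrite le_min hx hy.
Qed.

Lemma vgeB x y n : vge x n -> vge y n -> vge (x - y) n.
Proof. by move=> hx hy; apply: vgeD => //; apply: vgeN. Qed.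

Lemma vgeM x y n m : vge x n -> vge y m -> vge (x * y) (n + m).
Proof.
case=> [->|hx]; first by rewrite mul0r; left.
case=> [->|hy]; first by rewrite mulr0; left.
case: (eqVneq x 0) => [->|x0]; first by rewrite mul0r; left.
case: (eqVneq y 0) => [->|y0]; first by rewrite mulr0; left.
by right; rewrite vM // lerD.
Qed.

Lemma vge_v x : vge x (v x).
Proof. by right. Qed.

Lemma vge1 : vge 1 0.
Proof. by right; rewrite v1. Qed.

Lemma vge_nat k : vge (k%:R) 0.
Proof.
elim: k => [|k IH]; first by left.
by rewrite mulrS; apply: vgeD => //; apply: vge1.
Qed.

Lemma vge_int (k : int) : vge (k%:~R) 0.
Proof.
case: k => k; first exact: vge_nat.
by rewrite NegzE mulrNz; apply: vgeN; apply: vge_nat.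
Qed.

Lemma vge_trans x y z n : vge (x - y) n -> vge (y - z) n -> vge (x - z) n.
Proof.
move=> h1 h2; have -> : x - z = (x - y) + (y - z) by rewrite addrA subrK.
exact: vgeD.
Qed.

Lemma vge_sym x y n : vge (x - y) n -> vge (y - x) n.
Proof. by move=> /vgeN; rewrite opprB. Qed.

Lemma v_loc x y : x != 0 -> vge (y - x) (v x + 1) -> y != 0 /\ v y = v x.
Proof.
move=> x0 h.
have yne : y != 0.
  apply/negP=> /eqP y0; move: h; rewrite y0 sub0r => /vgeN'.
  by case=> [/eqP|]; [rewrite (negbTE x0)|lia].
split=> //.
case: (eqVneq (y - x) 0) => [/eqP|d0].
  by rewrite subr_eq0 => /eqP ->.
have hd : v x + 1 <= v (y - x) by case: h => // /eqP; rewrite (negbTE d0).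
have h1 := nlf_valD L x0 d0; rewrite addrC subrK in h1; have := h1 yne.
have mx0 : - (y - x) != 0 by rewrite oppr_eq0.
have h2 := nlf_valD L yne mx0; rewrite vN // opprB addrC subrK in h2.
have := h2 x0.
rewrite !ge_min => /orP [] h3 /orP [] h4.
all: lia.
Qed.

Lemma vge_v_lt x n : x != 0 -> ~ vge x n -> v x < n.
Proof. by move=> x0 h; rewrite ltNge; apply/negP => hn; apply: h; right. Qed.

Lemma vge1_neq0 y : vge (y - 1) 1 -> y != 0.
Proof.
move=> h; apply/eqP => y0; move: h; rewrite y0 sub0r => /vgeN'.
by case=> [/eqP|]; [rewrite oner_eq0|rewrite v1].
Qed.

End Val.


Section Unif.
Variables (F : fieldType) (p : nat) (L : nonarch_local_field F p).
Local Notation v := (nlf_val L).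
Local Notation vge := (vge L).

Lemma unif_ex : exists w : F, (w != 0) && (v w == 1).
Proof. by have [w [h1 h2]] := nlf_unif L; exists w; rewrite h1 h2 eqxx. Qed.

Definition upi : F := xchoose unif_ex.

Lemma upi_neq0 : upi != 0.
Proof. by have /andP[] := xchooseP unif_ex. Qed.

Lemma v_upi : v upi = 1.
Proof. by have /andP[_ /eqP] := xchooseP unif_ex. Qed.

Lemma upi_expn_neq0 n : upi ^+ n != 0.
Proof. exact: expf_neq0 upi_neq0. Qed.

Lemma v_upi_expn n : v (upi ^+ n) = n%:Z.
Proof.
elim: n => [|n IH]; first by rewrite expr0 v1.
by rewrite exprS vM ?upi_neq0 ?upi_expn_neq0 // IH v_upi; lia.
Qed.

Lemma upiz_neq0 (k : int) : upi ^ k != 0.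
Proof. exact: expfz_neq0 upi_neq0. Qed.

Lemma v_upiz (k : int) : v (upi ^ k) = k.
Proof.
case: k => n /=; first exact: v_upi_expn.
rewrite vV ?upi_expn_neq0 // v_upi_expn; lia.
Qed.

Lemma vge_upiz (k : int) : vge (upi ^ k) k.
Proof. by right; rewrite v_upiz. Qed.

Lemma upizD (a b : int) : upi ^ (a + b) = upi ^ a * upi ^ b.
Proof. exact: expfzDr upi_neq0. Qed.

Definition resid_ex := nlf_residue_finite L.

Lemma split_ball (s : seq F)
  (hs : forall x : F, (x = 0 \/ 0 <= v x) ->
       exists2 a, a \in s & (a = 0 \/ 0 <= v a) /\ (x - a = 0 \/ 1 <= v (x - a)))
  (c z : F) (k : int) :
  vge (z - c) k -> exists2 a, a \in s & vge a 0 /\ vge (z - (c + upi ^ k * a)) (k + 1).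
Proof.
move=> hz.
set t := (z - c) * upi ^ (- k).
have ht : vge t 0.
  have := vgeM hz (vge_upiz (- k)); by rewrite subrr.
have [a ha [ha0 hta]] := hs t ht.
exists a => //; split => //.
have -> : z - (c + upi ^ k * a) = upi ^ k * (t - a).
  have e : upi ^ k * upi ^ (- k) = 1 by rewrite -upizD subrr expr0z.
  rewrite /t mulrBr mulrCA e mulr1; ring.
have := vgeM (vge_upiz k) hta; by [].
Qed.

Lemma list_max (s : seq F) (P : F -> int -> Prop) :
  (forall a m m', P a m -> m <= m' -> P a m') ->
  (forall a, a \in s -> exists m, P a m) -> exists M, forall a, a \in s -> P a M.
Proof.
move=> mono; elim: s => [|b s IH] h; first by exists 0.
have [m1 hm1] := h b (mem_head _ _).
have [m2 hm2] : exists M, forall a, a \in s -> P a M.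
  by apply: IH => a ha; apply: h; rewrite in_cons ha orbT.
exists (Num.max m1 m2) => a; rewrite in_cons => /orP[/eqP->|ha].
  by apply: mono hm1 _; rewrite le_max lexx.
by apply: mono (hm2 a ha) _; rewrite le_max lexx orbT.
Qed.

Section UC.
Variables (T : Type) (phi : F -> T) (c0 : T).
Hypothesis phiLC : forall z, exists n, forall z', vge (z' - z) n -> phi z' = phi z.
Variable N : int.
Hypothesis phiS : forall z, ~ vge z N -> phi z = c0.

Definition bad (c : F) (k : int) :=
  forall m, exists z e, vge (z - c) k /\ vge e m /\ phi (z + e) <> phi z.

Variable s : seq F.
Hypothesis hs : forall x : F, (x = 0 \/ 0 <= v x) ->
       exists2 a, a \in s & (a = 0 \/ 0 <= v a) /\ (x - a = 0 \/ 1 <= v (x - a)).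

Lemma bad_split c k : bad c k -> exists c', vge (c' - c) k /\ bad c' (k + 1).
Proof.
move=> hb; apply: NNPP => hn.
have H : forall a, a \in s -> exists m, vge a 0 -> forall z e, vge (z - (c + upi ^ k * a)) (k + 1) ->
    vge e m -> phi (z + e) = phi z.
  move=> a ha; apply: NNPP => hn2; apply: hn; exists (c + upi ^ k * a); split.
    rewrite addrAC subrr add0r.
    apply: NNPP => ha0; apply: hn2; exists 0 => ha0'; by exfalso; apply: ha0; have := vgeM (vge_upiz k) ha0'; rewrite addr0.
  move=> m; apply: NNPP => hn3; apply: hn2; exists m => ha0 z e h1 h2.
  apply: NNPP => hn4; apply: hn3; by exists z, e.
have mono : forall a m m', (vge a 0 -> forall z e, vge (z - (c + upi ^ k * a)) (k + 1) ->
    vge e m -> phi (z + e) = phi z) -> m <= m' -> (vge a 0 -> forall z e, vge (z - (c + upi ^ k * a)) (k + 1) ->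
    vge e m' -> phi (z + e) = phi z).
  by move=> a m m' hm hle ha0 z e h1 h2; apply: hm h1 _ => //; apply: vge_le h2.
have [M HM] := list_max mono H.
have [z [e [h1 [h2 h3]]]] := hb M.
have [a ha [ha0 hza]] := split_ball hs h1.
by apply: h3; apply: HM hza h2.
Qed.

Definition nextc (c : F) (k : int) : F :=
  match pselect (exists c', vge (c' - c) k /\ bad c' (k + 1)) with
  | left H => proj1_sig (cid H)
  | right _ => c end.

Lemma nextcP c k : bad c k -> vge (nextc c k - c) k /\ bad (nextc c k) (k + 1).
Proof.
move=> hb; rewrite /nextc; case: pselect => [H|H]; last by exfalso; apply: H; apply: bad_split.
exact: (proj2_sig (cid H)).
Qed.

Fixpoint cs (i : nat) : F := match i with 0%N => 0 | i'.+1 => nextc (cs i') (N + i'%:Z) end.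

Lemma cs_bad_step i : bad (cs i) (N + i%:Z) ->
  vge (cs i.+1 - cs i) (N + i%:Z) /\ bad (cs i.+1) (N + i.+1%:Z).
Proof.
move=> h; have [h1 h2] := nextcP h; split => //=.
by have -> : N + i.+1%:Z = N + i%:Z + 1 by lia.
Qed.

Hypothesis bad0 : bad 0 N.

Lemma cs_bad i : bad (cs i) (N + i%:Z).
Proof.
elim: i => [|i IH]; first by rewrite addr0.
exact: (cs_bad_step IH).2.
Qed.

Lemma cs_cauchy i d : vge (cs (i + d) - cs i) (N + i%:Z).
Proof.
elim: d => [|d IH]; first by rewrite addn0 subrr; left.
rewrite addnS; apply: vge_trans _ IH.
apply: vge_le (cs_bad_step (cs_bad (i + d))).1; lia.
Qed.

Lemma cs_cauchy' i j : (i <= j)%N -> vge (cs j - cs i) (N + i%:Z).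
Proof. by move=> hij; rewrite -(subnKC hij); apply: cs_cauchy. Qed.

Lemma no_bad : False.
Proof.
have [l hl] : exists l : F, forall n : int, exists N0 : nat, forall i : nat, (N0 <= i)%N ->
          cs i - l = 0 \/ n <= v (cs i - l).
  apply: nlf_complete => n; exists `|n - N|%N => i j hi hj.
  have h1 := cs_cauchy' hi; have h2 := cs_cauchy' hj.
  have h3 := vge_trans h1 (vge_sym h2).
  by apply: vge_le h3; lia.
have [nl hnl] := phiLC l.
have [N0 hN0] := hl nl.
set i := maxn N0 `|nl - N|%N.
have hi := hN0 i (leq_maxl _ _).
have [z [e [h1 [h2 h3]]]] := cs_bad i nl.
have hz : vge (z - l) nl.
  apply: vge_trans (_ : vge (cs i - l) nl) => //.
  by apply: vge_le h1; rewrite /i; lia.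
apply: h3; rewrite (hnl z hz) hnl //.
have -> : z + e - l = (z - l) + e by ring.
exact: vgeD.
Qed.
End UC.

Lemma UC (T : Type) (phi : F -> T) (c0 : T) :
  (forall z, exists n, forall z', vge (z' - z) n -> phi z' = phi z) ->
  (exists N, forall z, ~ vge z N -> phi z = c0) ->
  exists m, forall z e, vge e m -> phi (z + e) = phi z.
Proof.
move=> hLC [N hN]; apply: NNPP => hn.
have [s hs] := nlf_residue_finite L.
apply: (no_bad hLC (N := N) hs).
move=> m; apply: NNPP => hb; apply: hn; exists (Num.max m N) => z e he.
apply: NNPP => hne; apply: hb; exists z, e; split; last split => //.
- rewrite subr0; apply: NNPP => hzN; apply: hne.
  rewrite (hN z hzN) hN //.
  move=> hzeN.
  have hz0 : z != 0 by apply/eqP => z0; apply: hzN; rewrite z0; left.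
  have hvz := vge_v_lt hz0 hzN.
  have : vge (z + e - z) (v z + 1).
    rewrite addrAC subrr add0r; apply: vge_le he; rewrite le_max; apply/orP; right; lia.
  move=> /(v_loc (hz0)) [hze0 hv]. rewrite -hv in hvz.
  by case: hzeN => [/eqP|]; [rewrite (negbTE hze0) | lia].
- by apply: vge_le he; rewrite le_max lexx.
Qed.

End Unif.


Lemma ord2_cases (i : 'I_2) : i = 0 \/ i = 1.
Proof. by case: i => [[|[|n]]] //= Hi; [left|right]; apply: val_inj. Qed.

Section Mx.
Variable (R : comNzRingType).

Definition mk2 (a b c d : R) : 'M[R]_2 :=
  \matrix_(i < 2, j < 2) if i == 0 then (if j == 0 then a else b) else (if j == 0 then c else d).

Lemma mk2E a b c d :
  [/\ mk2 a b c d 0 0 = a, mk2 a b c d 0 1 = b, mk2 a b c d 1 0 = c & mk2 a b c d 1 1 = d].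
Proof. by rewrite !mxE. Qed.

Lemma mk2_00 a b c d : mk2 a b c d 0 0 = a. Proof. by rewrite mxE. Qed.
Lemma mk2_01 a b c d : mk2 a b c d 0 1 = b. Proof. by rewrite mxE. Qed.
Lemma mk2_10 a b c d : mk2 a b c d 1 0 = c. Proof. by rewrite mxE. Qed.
Lemma mk2_11 a b c d : mk2 a b c d 1 1 = d. Proof. by rewrite mxE. Qed.

Lemma mx2_eta (A : 'M[R]_2) : A = mk2 (A 0 0) (A 0 1) (A 1 0) (A 1 1).
Proof.
apply/matrixP => i j; rewrite mxE.
by case: (ord2_cases i) => ->; case: (ord2_cases j) => ->.
Qed.

Lemma mx2P (A B : 'M[R]_2) : A 0 0 = B 0 0 -> A 0 1 = B 0 1 -> A 1 0 = B 1 0 -> A 1 1 = B 1 1 -> A = B.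
Proof. by move=> h1 h2 h3 h4; rewrite (mx2_eta A) (mx2_eta B) h1 h2 h3 h4. Qed.

Lemma sum2 (f : 'I_2 -> R) : \sum_(k < 2) f k = f 0 + f 1.
Proof. by rewrite big_ord_recl big_ord1; congr (f _ + f _); apply: val_inj. Qed.

Lemma mulmx2E (A B : 'M[R]_2) i j : (A *m B) i j = A i 0 * B 0 j + A i 1 * B 1 j.
Proof. by rewrite mxE sum2. Qed.

Lemma det2 (A : 'M[R]_2) : \det A = A 0 0 * A 1 1 - A 0 1 * A 1 0.
Proof.
rewrite (expand_det_row _ 0) sum2 /cofactor !det_mx11 !mxE /=.
have l1 : lift (0 : 'I_2) (0 : 'I_1) = 1 by apply: val_inj.
have l2 : lift (1 : 'I_2) (0 : 'I_1) = 0 by apply: val_inj.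
rewrite l1 l2 /= expr0 expr1 mul1r; ring.
Qed.

End Mx.


Section Dom.
Variables (X : choiceType) (R : X -> X -> Prop) (D : X -> Prop) (sg : X -> X) (p : nat).
Hypothesis p_gt0 : (0 < p)%N.
Hypothesis Rrefl : forall x, R x x.
Hypothesis Rsym : forall x y, R x y -> R y x.
Hypothesis Rtrans : forall x y z, R x y -> R y z -> R x z.
Hypothesis Rsg : forall x y, R x y -> R (sg x) (sg y).
Hypothesis Rsg_inv : forall x y, R (sg x) (sg y) -> R x y.
Hypothesis Rp : forall x, D x -> R (iter p sg x) x.
Hypothesis Rj : forall x j, D x -> (0 < j < p)%N -> ~ R (iter j sg x) x.
Hypothesis Dsg : forall x, D x -> D (sg x).
Hypothesis DR : forall x y, R x y -> D x -> D y.

Lemma Rsg_iter n x y : R x y -> R (iter n sg x) (iter n sg y).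
Proof. by elim: n => //= n IH /IH /Rsg. Qed.

Lemma Rsg_iter_inv n x y : R (iter n sg x) (iter n sg y) -> R x y.
Proof. by elim: n => //= n IH /Rsg_inv /IH. Qed.

Lemma D_iter n x : D x -> D (iter n sg x).
Proof. by elim: n => //= n IH /IH /Dsg. Qed.

Definition Om (x y : X) := exists i, (i < p)%N /\ R y (iter i sg x).

Lemma Om_self x : Om x x.
Proof. by exists 0%N; split. Qed.

Lemma Om_sg x y : D x -> (Om (sg x) y <-> Om x y).
Proof.
move=> Dx; split.
- case=> i [hi hy]; rewrite -iterSr in hy.
  case: (ltnP i.+1 p) => hi1; first by exists i.+1.
  have ei : i.+1 = p by apply/eqP; rewrite eqn_leq hi1 hi.
  exists 0%N; split => //=; rewrite ei in hy; exact: Rtrans hy (Rp Dx).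
- case=> i [hi hy]; case: i hi hy => [|i] hi hy.
    exists p.-1; split; first by rewrite prednK // ltnSn.
    rewrite -iterSr prednK //; apply: Rtrans hy _; exact: Rsym (Rp Dx).
  exists i; split; first exact: ltnW.
  by rewrite iterSr in hy.
Qed.

Lemma Om_iter n x y : D x -> (Om (iter n sg x) y <-> Om x y).
Proof.
move=> Dx; elim: n => [|n IH] /=; first by [].
have := Om_sg y (D_iter n Dx); tauto.
Qed.

Lemma Om_R x x' y : R x x' -> (Om x' y <-> Om x y).
Proof.
move=> hx; split; case=> i [hi hy]; exists i; split => //.
- apply: Rtrans hy _; apply: Rsg_iter; exact: Rsym.
- apply: Rtrans hy _; exact: Rsg_iter.
Qed.

Lemma Om_ex x : exists y, `[< Om x y >].
Proof. by exists x; apply/asboolP; apply: Om_self. Qed.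

Definition rep x := xchoose (Om_ex x).

Lemma rep_Om x : Om x (rep x).
Proof. exact/asboolP/(xchooseP (Om_ex x)). Qed.

Lemma rep_eq x x' : (forall y, Om x y <-> Om x' y) -> rep x = rep x'.
Proof.
move=> h; apply: eq_xchoose => y.
by apply/asboolP/asboolP => /h.
Qed.

Definition Adom x := `[< D x /\ R x (rep x) >].

Lemma domain_exists : exists A : X -> bool,
  (forall x y, R x y -> A x -> A y) /\ (forall x, A x -> D x) /\
  (forall x, D x -> exists i, [/\ (i < p)%N, A (iter i sg x) &
        forall j, (j < p)%N -> A (iter j sg x) -> j = i]).
Proof.
exists Adom; split; [|split].
- move=> x y hxy /asboolP [Dx hx]; apply/asboolP; split; first exact: DR hxy Dx.
  have -> : rep y = rep x by apply: rep_eq => z; exact: Om_R hxy.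
  exact: Rtrans (Rsym hxy) hx.
- by move=> x /asboolP [].
- move=> x Dx; have [i [hi hri]] := rep_Om x.
  have erep : forall j, rep (iter j sg x) = rep x.
    by move=> j; apply: rep_eq => y; exact: Om_iter.
  exists i; split => //.
    by apply/asboolP; split; [exact: D_iter|rewrite erep; exact: Rsym].
  move=> j hj /asboolP [_]; rewrite erep => hjr.
  have hji : R (iter j sg x) (iter i sg x) by exact: Rtrans hjr hri.
  apply: NNPP => neq.
  case: (ltngtP i j) => hij; last by apply: neq; rewrite hij.
  + have := @Rj x (j - i)%N Dx; rewrite subn_gt0 hij /=.
    have -> : (j - i < p)%N by apply: leq_ltn_trans (leq_subr _ _) hj.
    move=> /(_ isT); apply.
    apply: (@Rsg_iter_inv i); rewrite -iterD subnKC; [exact: hji | exact: ltnW].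
  + have := @Rj x (i - j)%N Dx; rewrite subn_gt0 hij /=.
    have -> : (i - j < p)%N by apply: leq_ltn_trans (leq_subr _ _) hi.
    move=> /(_ isT); apply.
    apply: (@Rsg_iter_inv j); rewrite -iterD subnKC; [exact: Rsym | exact: ltnW].
Qed.
End Dom.


Section Mult.
Variables (F : fieldType) (p : nat) (L : nonarch_local_field F p).
Local Notation v := (nlf_val L).
Local Notation vge := (vge L).
Local Notation pi := (upi L).

Lemma vge_p : vge (p%:R) 1.
Proof. by case: (nlf_resid_char L) => h; [left|right]. Qed.

Lemma p_prime : prime p.
Proof. exact: nlf_prime L. Qed.

Lemma not_vge1_1 : ~ vge 1 1.
Proof. by case=> [/eqP|]; [rewrite oner_eq0|rewrite v1]. Qed.

Lemma v_small_nat j : (0 < j < p)%N -> (j%:R : F) != 0 /\ v (j%:R) = 0.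
Proof.
move=> /andP [j0 jp].
have cop : coprime j p.
  rewrite coprime_sym prime_coprime ?p_prime //; apply/negP => /(dvdn_leq j0).
  by rewrite leqNgt jp.
have [a _ ha] := Bezoutl p j0.
rewrite (eqP cop) in ha.
have e : ((1 + a * p) %/ j * j = 1 + a * p)%N by rewrite divnK.
have ej : (((1 + a * p) %/ j)%:R : F) * j%:R = 1 + a%:R * p%:R.
  by rewrite -!natrM e natrD natrM.
have nv1 : ~ vge (j%:R : F) 1.
  move=> hj; apply: not_vge1_1.
  have -> : (1 : F) = ((1 + a * p) %/ j)%:R * j%:R - a%:R * p%:R by rewrite ej; ring.
  apply: vgeB.
    by have := vgeM (vge_nat L ((1 + a * p) %/ j)) hj; rewrite add0r.
  by have := vgeM (vge_nat L a) vge_p; rewrite add0r.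
have j0' : (j%:R : F) != 0 by apply/eqP => h; apply: nv1; rewrite h; left.
split => //.
have := vge_nat L j; case=> [/eqP|h]; first by rewrite (negbTE j0').
have : ~ (1 <= v (j%:R : F)) by move=> h1; apply: nv1; right.
lia.
Qed.

Variable r : nat.
Hypothesis r1 : (1 <= r)%N.

Definition sm : F := 1 + pi ^+ r.

Lemma vge_pir : vge (pi ^+ r) r%:Z.
Proof. by right; rewrite v_upi_expn. Qed.

Lemma sm_loc : sm != 0 /\ v sm = 0.
Proof.
have h : vge (sm - 1) (v 1 + 1).
  rewrite /sm addrAC subrr add0r v1 add0r; apply: vge_le vge_pir; lia.
by have := v_loc (oner_neq0 F) h; rewrite v1.
Qed.

Lemma sm_neq0 : sm != 0. Proof. by case: sm_loc. Qed.
Lemma v_sm : v sm = 0. Proof. by case: sm_loc. Qed.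

Lemma sm_binom j : vge (sm ^+ j - 1 - j%:R * pi ^+ r) (r%:Z + 1).
Proof.
elim: j => [|j IH]; first by rewrite expr0 subrr mul0r subr0; left.
set e := sm ^+ j - 1 - j%:R * pi ^+ r in IH.
have -> : sm ^+ j.+1 - 1 - j.+1%:R * pi ^+ r = sm * e + j%:R * (pi ^+ r * pi ^+ r).
  rewrite /e /sm exprS -natr1; ring.
apply: vgeD.
  by have := vgeM (vge_v L sm) IH; rewrite v_sm add0r.
have := vgeM (vge_nat L j) (vgeM vge_pir vge_pir); rewrite add0r => h.
apply: vge_le h; lia.
Qed.

Definition Rm (x y : F) : Prop :=
  (x = 0 /\ y = 0) \/ (x != 0 /\ vge (y - x) (v x + r%:Z + 1)).

Lemma Rm_loc x y : x != 0 -> vge (y - x) (v x + r%:Z + 1) -> y != 0 /\ v y = v x.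
Proof. move=> hx h; apply: v_loc hx _; apply: vge_le h; lia. Qed.

Lemma Rm_refl x : Rm x x.
Proof.
case: (eqVneq x 0) => [->|hx]; first by left.
by right; split => //; rewrite subrr; left.
Qed.

Lemma Rm_sym x y : Rm x y -> Rm y x.
Proof.
case=> [[-> ->]|[hx h]]; first by left.
have [hy hv] := Rm_loc hx h.
by right; split => //; rewrite hv; apply: vge_sym.
Qed.

Lemma Rm_trans x y z : Rm x y -> Rm y z -> Rm x z.
Proof.
case=> [[-> ->]|[hx h]]; first by [].
have [hy hv] := Rm_loc hx h.
case=> [[y0 _]|[_ h']]; first by rewrite y0 eqxx in hy.
by right; split => //; rewrite hv in h'; exact: vge_trans h' h.
Qed.

Definition smul (x : F) := sm * x.

Lemma Rm_sg x y : Rm x y -> Rm (smul x) (smul y).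
Proof.
case=> [[-> ->]|[hx h]]; first by left; rewrite /smul mulr0.
right; have hsx : smul x != 0 by rewrite mulf_neq0 ?sm_neq0.
split => //; rewrite /smul -mulrBr vM ?sm_neq0 // v_sm add0r.
by have := vgeM (vge_v L sm) h; rewrite v_sm add0r.
Qed.

Lemma Rm_sg_inv x y : Rm (smul x) (smul y) -> Rm x y.
Proof.
rewrite /smul; case=> [[h1 h2]|[hx h]].
  left; split; apply/eqP; move/eqP: h1; move/eqP: h2;
  by rewrite !mulf_eq0 (negbTE sm_neq0).
have x0 : x != 0 by move: hx; rewrite mulf_eq0 negb_or => /andP[].
right; split => //.
move: h; rewrite -mulrBr vM ?sm_neq0 // v_sm add0r => h.
have hi : vge (sm^-1) 0 by right; rewrite vV ?sm_neq0 // v_sm.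
have := vgeM hi h; rewrite add0r mulrA mulVf ?sm_neq0 // mul1r; by [].
Qed.

Lemma iter_smul j x : iter j smul x = sm ^+ j * x.
Proof. by elim: j => [|j IH] /=; rewrite ?expr0 ?mul1r // IH /smul exprS mulrA. Qed.

Lemma Rm_p x : x != 0 -> Rm (iter p smul x) x.
Proof.
move=> hx; apply: Rm_sym; right; split => //.
rewrite iter_smul -{2}[x]mul1r -mulrBl.
have h : vge (sm ^+ p - 1) (r%:Z + 1).
  have -> : sm ^+ p - 1 = (sm ^+ p - 1 - p%:R * pi ^+ r) + p%:R * pi ^+ r by ring.
  apply: vgeD; first exact: sm_binom.
  by have := vgeM vge_p vge_pir; rewrite addrC.
by have := vgeM h (vge_v L x); rewrite (_ : r%:Z + 1 + v x = v x + r%:Z + 1) //; lia.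
Qed.

Lemma Rm_j x j : x != 0 -> (0 < j < p)%N -> ~ Rm (iter j smul x) x.
Proof.
move=> hx hj /Rm_sym; case=> [[x0 _]|[_ h]]; first by rewrite x0 eqxx in hx.
move: h; rewrite iter_smul -{2}[x]mul1r -mulrBl => h.
have [j0 vj] := v_small_nat hj.
set x0 := j%:R * pi ^+ r.
have hx0 : x0 != 0 by rewrite mulf_neq0 ?upi_expn_neq0.
have vx0 : v x0 = r%:Z by rewrite vM ?upi_expn_neq0 // vj v_upi_expn add0r.
have [hy vy] : (sm ^+ j - 1) != 0 /\ v (sm ^+ j - 1) = v x0.
  apply: v_loc hx0 _; rewrite vx0; exact: sm_binom.
have hne : (sm ^+ j - 1) * x != 0 by rewrite mulf_neq0.
case: h => [/eqP|h]; first by rewrite (negbTE hne).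
move: h; rewrite vM // vy vx0; lia.
Qed.

Lemma Rm_D x y : Rm x y -> x != 0 -> y != 0.
Proof.
case=> [[x0 _]|[hx h]]; first by rewrite x0 eqxx.
by move=> _; case: (Rm_loc hx h).
Qed.

Lemma mult_domain : exists A : F -> bool,
  (forall x y, Rm x y -> A x -> A y) /\ (forall x, A x -> x != 0) /\
  (forall x, x != 0 -> exists i, [/\ (i < p)%N, A (sm ^+ i * x) &
        forall j, (j < p)%N -> A (sm ^+ j * x) -> j = i]).
Proof.
have p0 : (0 < p)%N by apply: prime_gt0 p_prime.
have [A [h1 [h2 h3]]] := @domain_exists F Rm (fun x => x != 0) smul p p0
  Rm_refl Rm_sym Rm_trans Rm_sg Rm_sg_inv Rm_p Rm_j
  (fun x hx => mulf_neq0 sm_neq0 hx) Rm_D.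
exists A; split => //; split => // x hx.
have [i [hi hA hu]] := h3 x hx; exists i; split; first by [].
  by rewrite -iter_smul.
by move=> j hj; rewrite -iter_smul; apply: hu.
Qed.

End Mult.


Lemma le_maxl' (a b : int) : a <= Num.max a b. Proof. by rewrite le_max lexx. Qed.
Lemma le_maxr' (a b : int) : b <= Num.max a b. Proof. by rewrite le_max lexx orbT. Qed.

Section Cts.
Variables (F : fieldType) (p : nat) (L : nonarch_local_field F p).
Local Notation v := (nlf_val L).
Local Notation vge := (vge L).

Definition close_mx (n : int) (h g : 'M[F]_2) := forall i j, vge (h i j - g i j) n.
Definition ctsAt (f : 'M[F]_2 -> F) g :=
  forall n, exists k, forall h, close_mx k h g -> vge (f h - f g) n.

Lemma close_le m n h g : m <= n -> close_mx n h g -> close_mx m h g.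
Proof. by move=> hmn hc i j; apply: vge_le (hc i j). Qed.

Lemma close_max m n h g : close_mx (Num.max m n) h g -> close_mx m h g /\ close_mx n h g.
Proof. by move=> hc; split; apply: close_le hc; rewrite le_max lexx ?orbT. Qed.

Lemma close_refl n g : close_mx n g g.
Proof. by move=> i j; rewrite subrr; left. Qed.

Lemma cts_entry i j g : ctsAt (fun h => h i j) g.
Proof. by move=> n; exists n => h hc; apply: hc. Qed.

Lemma cts_const c g : ctsAt (fun _ => c) g.
Proof. by move=> n; exists 0 => h _; rewrite subrr; left. Qed.

Lemma cts_ext f f' g : (forall h, f h = f' h) -> ctsAt f g -> ctsAt f' g.
Proof. by move=> e hf n; have [k hk] := hf n; exists k => h hc; rewrite -!e; apply: hk. Qed.

Lemma cts_add f1 f2 g : ctsAt f1 g -> ctsAt f2 g -> ctsAt (fun h => f1 h + f2 h) g.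
Proof.
move=> h1 h2 n; have [k1 hk1] := h1 n; have [k2 hk2] := h2 n.
exists (Num.max k1 k2) => h /close_max [c1 c2].
have -> : f1 h + f2 h - (f1 g + f2 g) = (f1 h - f1 g) + (f2 h - f2 g) by ring.
by apply: vgeD; [apply: hk1|apply: hk2].
Qed.

Lemma cts_opp f g : ctsAt f g -> ctsAt (fun h => - f h) g.
Proof.
move=> h1 n; have [k hk] := h1 n; exists k => h hc.
by rewrite -opprD; apply: vgeN; apply: hk.
Qed.

Lemma cts_sub f1 f2 g : ctsAt f1 g -> ctsAt f2 g -> ctsAt (fun h => f1 h - f2 h) g.
Proof. by move=> h1 h2; apply: cts_add => //; apply: cts_opp. Qed.

Lemma cts_mul f1 f2 g : ctsAt f1 g -> ctsAt f2 g -> ctsAt (fun h => f1 h * f2 h) g.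
Proof.
move=> h1 h2 n.
set A := v (f1 g); set B := v (f2 g).
have [k1 hk1] := h1 (n - B); have [k2 hk2] := h2 B; have [k3 hk3] := h2 (n - A).
exists (Num.max k1 (Num.max k2 k3)) => h /close_max [c1 /close_max [c2 c3]].
have hB : vge (f2 h) B.
  have -> : f2 h = (f2 h - f2 g) + f2 g by rewrite subrK.
  by apply: vgeD; [apply: hk2|apply: vge_v].
have -> : f1 h * f2 h - f1 g * f2 g = (f1 h - f1 g) * f2 h + f1 g * (f2 h - f2 g) by ring.
apply: vgeD.
  by apply: vge_le (vgeM (hk1 h c1) hB); lia.
by apply: vge_le (vgeM (vge_v L (f1 g)) (hk3 h c3)); rewrite -/A; lia.
Qed.

Lemma cts_inv f g : f g != 0 -> ctsAt f g -> ctsAt (fun h => (f h)^-1) g.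
Proof.
move=> fg0 h1 n.
set A := v (f g).
have [k hk] := h1 (Num.max (A + 1) (n + A + A)).
exists k => h hc.
have hh := hk h hc.
have [fh0 vfh] := v_loc fg0 (vge_le (le_maxl' _ _) hh : vge _ (A + 1)).
have -> : (f h)^-1 - (f g)^-1 = (- (f h - f g)) * (f h)^-1 * (f g)^-1 by field; rewrite fh0 fg0.
have h2 := vgeN (vge_le (le_maxr' _ _) hh : vge _ (n + A + A)).
have h3 : vge (f h)^-1 (- A) by right; rewrite vV // vfh.
have h4 : vge (f g)^-1 (- A) by right; rewrite vV.
by apply: vge_le (vgeM (vgeM h2 h3) h4); lia.
Qed.

Lemma cts_det g : ctsAt (fun h => \det h) g.
Proof.
apply: (@cts_ext (fun h => h 0 0 * h 1 1 - h 0 1 * h 1 0)); first by move=> h; rewrite det2.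
by apply: cts_sub; apply: cts_mul; apply: cts_entry.
Qed.

Lemma cts_div f1 f2 g : f2 g != 0 -> ctsAt f1 g -> ctsAt f2 g -> ctsAt (fun h => f1 h / f2 h) g.
Proof. by move=> h0 h1 h2; apply: cts_mul => //; apply: cts_inv. Qed.

Lemma cts_nonzero f g : f g != 0 -> ctsAt f g -> exists k, forall h, close_mx k h g -> f h != 0.
Proof.
move=> h0 h1; have [k hk] := h1 (v (f g) + 1); exists k => h hc.
by case: (v_loc h0 (hk h hc)).
Qed.

Variables (C : fieldType) (chi : F -> F -> C) (hchi : smooth_character L chi).

Definition lcAt (f : 'M[F]_2 -> C) g :=
  exists n, forall h, inG h -> close_mx n h g -> f h = f g.

Lemma lc_const c g : lcAt (fun _ => c) g.
Proof. by exists 0. Qed.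

Lemma lc_ext f f' g : (exists k, forall h, inG h -> close_mx k h g -> f h = f' h) ->
  f g = f' g -> lcAt f' g -> lcAt f g.
Proof.
move=> [k hk] e [n hn]; exists (Num.max k n) => h hG /close_max [c1 c2].
by rewrite hk // e hn.
Qed.

Lemma lc_binop (op : C -> C -> C) f1 f2 g : lcAt f1 g -> lcAt f2 g -> lcAt (fun h => op (f1 h) (f2 h)) g.
Proof.
move=> [n1 h1] [n2 h2]; exists (Num.max n1 n2) => h hG /close_max [c1 c2].
by rewrite h1 // h2.
Qed.

Lemma lc_comp (phi : F -> C) e g : ctsAt e g ->
  (exists n, forall z, vge (z - e g) n -> phi z = phi (e g)) -> lcAt (fun h => phi (e h)) g.
Proof.
move=> he [n hn]; have [k hk] := he n.
by exists k => h _ hc; apply: hn; apply: hk.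
Qed.

Lemma chi11 : chi 1 1 = 1.
Proof.
have [h0 [hm _]] := hchi.
have e := hm 1 1 1 1 (oner_neq0 F) (oner_neq0 F) (oner_neq0 F) (oner_neq0 F).
rewrite !mulr1 in e.
have n0 := h0 1 1 (oner_neq0 F) (oner_neq0 F).
by apply: (mulfI n0); rewrite mulr1 -e.
Qed.

Lemma lc_chi e1 e2 g : ctsAt e1 g -> ctsAt e2 g -> e1 g != 0 -> e2 g != 0 ->
  lcAt (fun h => chi (e1 h) (e2 h)) g.
Proof.
move=> c1 c2 n1 n2.
have [h0 [hm [n0 hn0]]] := hchi.
set r1 := fun h => e1 h / e1 g; set r2 := fun h => e2 h / e2 g.
have cr1 : ctsAt r1 g by apply: cts_div => //; apply: cts_const.
have cr2 : ctsAt r2 g by apply: cts_div => //; apply: cts_const.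
have r1g : r1 g = 1 by rewrite /r1 mulfV.
have r2g : r2 g = 1 by rewrite /r2 mulfV.
have [k1 hk1] := cr1 (Num.max n0 1); have [k2 hk2] := cr2 (Num.max n0 1).
exists (Num.max k1 k2) => h hG /close_max [cc1 cc2].
have a1 := hk1 h cc1; have a2 := hk2 h cc2; rewrite r1g in a1; rewrite r2g in a2.
have hr1 : r1 h != 0 by apply: vge1_neq0; apply: vge_le (le_maxr' _ _) a1.
have hr2 : r2 h != 0 by apply: vge1_neq0; apply: vge_le (le_maxr' _ _) a2.
have e1h : e1 h = e1 g * r1 h by rewrite /r1 mulrCA mulfV // mulr1.
have e2h : e2 h = e2 g * r2 h by rewrite /r2 mulrCA mulfV // mulr1.
rewrite e1h e2h hm // (hn0 (r1 h) (r2 h)) ?mulr1 //.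
  exact: vge_le (le_maxl' _ _) a1.
exact: vge_le (le_maxl' _ _) a2.
Qed.

End Cts.


Section Ind.
Variables (p : nat) (F : fieldType) (L : nonarch_local_field F p).
Variables (C : fieldType) (chi : F -> F -> C) (hchi : smooth_character L chi).
Local Notation v := (nlf_val L).
Local Notation vge := (vge L).
Local Notation V := (inInd L chi).
Local Notation close_mx := (close_mx L).
Local Notation lcAt := (lcAt L).
Local Notation ctsAt := (ctsAt L).

Lemma chi_neq0 a d : a != 0 -> d != 0 -> chi a d != 0.
Proof. by case: hchi => h _; apply: h. Qed.

Lemma chiM a d a' d' : a != 0 -> d != 0 -> a' != 0 -> d' != 0 ->
  chi (a * a') (d * d') = chi a d * chi a' d'.
Proof. by case: hchi => _ [h _]; apply: h. Qed.

Lemma V_lin (c : C) f1 f2 : V f1 -> V f2 -> V (fun x => c * f1 x + f2 x).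
Proof.
move=> [z1 [e1 l1]] [z2 [e2 l2]]; split; [|split].
- by move=> g hg; rewrite z1 // z2 // mulr0 addr0.
- by move=> b g hb hg; rewrite e1 // e2 //; ring.
- move=> g hg; have := lc_binop (fun a b => c * a + b) (l1 g hg) (l2 g hg).
  by [].
Qed.

Lemma V0 : V (fun _ => 0).
Proof.
split; [by []|split]; first by move=> *; rewrite mulr0.
by move=> g _; exists 0.
Qed.

Lemma V_scale (c : C) f : V f -> V (fun x => c * f x).
Proof.
move=> hf; have := V_lin c hf V0.
by rewrite (_ : (fun x => c * f x + 0) = (fun x => c * f x)) //; apply: functional_extensionality => x; rewrite addr0.
Qed.

Lemma V_add f1 f2 : V f1 -> V f2 -> V (fun x => f1 x + f2 x).
Proof.
move=> h1 h2; have := V_lin 1 h1 h2.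
by rewrite (_ : (fun x => 1 * f1 x + f2 x) = (fun x => f1 x + f2 x)) //; apply: functional_extensionality => x; rewrite mul1r.
Qed.

Lemma V_sum (I : Type) (r : seq I) (fs : I -> 'M[F]_2 -> C) :
  (forall i, V (fs i)) -> V (fun x => \sum_(i <- r) fs i x).
Proof.
move=> h; elim: r => [|i r IH].
  by rewrite (_ : (fun x => \sum_(i <- [::]) fs i x) = fun _ => 0); [exact: V0|apply: functional_extensionality => x; rewrite big_nil].
rewrite (_ : (fun x => \sum_(j <- i :: r) fs j x) = fun x => fs i x + \sum_(j <- r) fs j x).
  exact: V_add.
by apply: functional_extensionality => x; rewrite big_cons.
Qed.

Lemma mx_bound (h : 'M[F]_2) : exists a, forall i j, vge (h i j) a.
Proof.
exists (Num.min (Num.min (v (h 0 0)) (v (h 0 1))) (Num.min (v (h 1 0)) (v (h 1 1)))) => i j.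
by case: (ord2_cases i) => ->; case: (ord2_cases j) => ->; apply: vge_le (vge_v L _);
  rewrite !ge_min lexx ?orbT.
Qed.

Lemma close_mulr k a (x x' h : 'M[F]_2) : (forall i j, vge (h i j) a) ->
  close_mx k x' x -> close_mx (k + a) (x' *m h) (x *m h).
Proof.
move=> ha hc i j; rewrite !mulmx2E.
have -> : x' i 0 * h 0 j + x' i 1 * h 1 j - (x i 0 * h 0 j + x i 1 * h 1 j) =
  (x' i 0 - x i 0) * h 0 j + (x' i 1 - x i 1) * h 1 j by ring.
by apply: vgeD; apply: vgeM.
Qed.

Lemma inG_mul (x h : 'M[F]_2) : inG x -> inG h -> inG (x *m h).
Proof. by rewrite /inG det_mulmx => h1 h2; rewrite mulf_neq0. Qed.

Lemma inG_mul_inv (x h : 'M[F]_2) : inG h -> inG (x *m h) -> inG x.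
Proof. by rewrite /inG det_mulmx => h1; rewrite mulf_eq0 negb_or => /andP []. Qed.

Lemma V_rho h f : inG h -> V f -> V (rho h f).
Proof.
move=> hG [z1 [e1 l1]]; split; [|split].
- by move=> g hg; rewrite /rho z1 // => /(inG_mul_inv hG).
- by move=> b g hb hg; rewrite /rho -mulmxA e1 //; apply: inG_mul.
- move=> g hg; have [n hn] := l1 _ (inG_mul hg hG).
  have [a ha] := mx_bound h.
  exists (n - a) => x hx hc; rewrite /rho; apply: hn; first exact: inG_mul.
  by have := close_mulr ha hc; rewrite subrK.
Qed.

Lemma inP_inG (b : 'M[F]_2) : inP b -> inG b.
Proof. by case. Qed.

Lemma inG1 : inG (1%:M : 'M[F]_2).
Proof. by rewrite /inG det1 oner_neq0. Qed.

Lemma V_P f (b : 'M[F]_2) : V f -> inP b -> f b = chi (b 0 0) (b 1 1) * f 1%:M.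
Proof. by move=> [_ [e _]] hb; rewrite -{1}(mulmx1 b) e //; apply: inG1. Qed.

Definition wu (z : F) : 'M[F]_2 := mk2 0 1 1 z.

Lemma det_wu z : \det (wu z) = -1.
Proof. by rewrite det2 /wu !mxE /=; ring. Qed.

Lemma inG_wu z : inG (wu z).
Proof. by rewrite /inG det_wu oppr_eq0 oner_neq0. Qed.

Lemma V_EQ f x : V f -> inG x -> x 1 0 != 0 ->
  f x = chi (- \det x / x 1 0) (x 1 0) * f (wu (x 1 1 / x 1 0)).
Proof.
move=> [_ [e _]] hx h10.
set b := mk2 (- \det x / x 1 0) (x 0 0) 0 (x 1 0).
have hb : inP b.
  split; last by rewrite /b mk2_10.
  rewrite /inG det2 /b !mk2_00 !mk2_01 !mk2_10 !mk2_11 mulr0 subr0.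
  rewrite mulf_neq0 // mulf_neq0 ?invr_eq0 // oppr_eq0; exact: hx.
have ex : b *m wu (x 1 1 / x 1 0) = x.
  apply: mx2P; rewrite !mulmx2E /b /wu ?mk2_00 ?mk2_01 ?mk2_10 ?mk2_11 ?det2; field; by [].
rewrite -{1}ex e //; last exact: inG_wu.
by rewrite /b mk2_00 mk2_11.
Qed.

Definition nice (phi : F -> C) :=
  (forall z, exists n, forall z', vge (z' - z) n -> phi z' = phi z) /\ (exists N, forall z, ~ vge z N -> phi z = 0).

Definition Gph (phi : F -> C) (x : 'M[F]_2) : C :=
  if (x 1 0 != 0) && (\det x != 0) then chi (- \det x / x 1 0) (x 1 0) * phi (x 1 1 / x 1 0) else 0.

Lemma Gph_nice phi : nice phi -> V (Gph phi).
Proof.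
move=> [hLC [N hN]]; split; [|split].
- by move=> g hg; rewrite /Gph; case: ifP => // /andP [_ h]; exfalso; apply: hg.
- move=> b g [hb b10] hg; rewrite /Gph.
  have e10 : (b *m g) 1 0 = b 1 1 * g 1 0 by rewrite mulmx2E b10 mul0r add0r.
  have e11 : (b *m g) 1 1 = b 1 1 * g 1 1 by rewrite mulmx2E b10 mul0r add0r.
  have eb : \det b = b 0 0 * b 1 1 by rewrite det2 b10 mulr0 subr0.
  have b00 : b 0 0 != 0 by move: hb; rewrite eb mulf_eq0 negb_or => /andP [].
  have b11 : b 1 1 != 0 by move: hb; rewrite eb mulf_eq0 negb_or => /andP [].
  have hbg : \det (b *m g) != 0 by rewrite det_mulmx mulf_neq0.
  rewrite e10 e11 hbg (negbTE hg) /= andbT mulf_eq0 negb_or b11 /=.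
  case: ifP => g10; last by rewrite mulr0.
  rewrite /= det_mulmx eb.
  have E1 : b 1 1 * g 1 1 / (b 1 1 * g 1 0) = g 1 1 / g 1 0.
    by field; rewrite g10 b11.
  have E2 : - (b 0 0 * b 1 1 * \det g) / (b 1 1 * g 1 0) = b 0 0 * (- \det g / g 1 0).
    by field; rewrite g10 b11.
  have hd : - \det g / g 1 0 != 0 by rewrite mulf_neq0 ?invr_eq0 ?g10 // oppr_eq0; exact: hg.
  rewrite E1 E2 chiM ?g10 // mulrA //.
- move=> g hg.
  case: (eqVneq (g 1 0) 0) => g10.
  + (* near P, Gph vanishes *)
    have eg : \det g = g 0 0 * g 1 1 by rewrite det2 g10 mulr0 subr0.
    have g11 : g 1 1 != 0 by move: hg; rewrite /inG eg mulf_eq0 negb_or => /andP [].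
    exists (Num.max (v (g 1 1) + 1) (v (g 1 1) - N + 1)) => h hh /close_max [c1 c2].
    rewrite /Gph g10 eqxx /=.
    case: ifP => // /andP [h10 _].
    have [h11 vh11] := v_loc g11 (c1 1 1).
    have := c2 1 0; rewrite g10 subr0 => hv.
    have hv' : v (g 1 1) - N + 1 <= v (h 1 0) by case: hv => // /eqP; rewrite (negbTE h10).
    rewrite hN ?mulr0 //.
    move=> hz; case: hz => [/eqP|hz].
      by rewrite mulf_eq0 invr_eq0 (negbTE h11) (negbTE h10).
    move: hz; rewrite vM ?invr_eq0 // vV // vh11; lia.
  + have hd : \det g != 0 := hg.
    have cd : ctsAt (fun h => \det h) g := cts_det L g.
    have c10 : ctsAt (fun h => h 1 0) g := cts_entry L 1 0 g.
    have [k1 hk1] := cts_nonzero g10 c10.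
    apply: (@lc_ext _ _ _ _ _ (fun h => chi (- \det h / h 1 0) (h 1 0) * phi (h 1 1 / h 1 0))).
    * exists k1 => h hh hc; rewrite /Gph hk1 //=.
      by have -> : \det h != 0 := hh.
    * by rewrite /Gph g10 hd.
    * apply: (lc_binop (fun a b => a * b)).
        apply: lc_chi => //.
          by apply: cts_div => //; apply: cts_opp.
        by rewrite mulf_neq0 ?invr_eq0 // oppr_eq0.
      apply: lc_comp; first by apply: cts_div => //; apply: cts_entry.
      exact: hLC.
Qed.


End Ind.


Section Ind2.
Variables (p : nat) (F : fieldType) (L : nonarch_local_field F p).
Variables (C : fieldType) (chi : F -> F -> C) (hchi : smooth_character L chi).
Local Notation v := (nlf_val L).
Local Notation vge := (vge L).
Local Notation V := (inInd L chi).
Local Notation close_mx := (close_mx L).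
Local Notation nice := (nice L).
Local Notation Gph := (Gph chi).

Definition ell (y : F) : 'M[F]_2 := mk2 1 0 y 1.

Lemma det_ell y : \det (ell y) = 1.
Proof. by rewrite det2 /ell !mxE /=; ring. Qed.

Lemma inG_ell y : inG (ell y).
Proof. by rewrite /inG det_ell oner_neq0. Qed.

Lemma close_ell n y : vge y n -> close_mx n (ell y) 1%:M.
Proof.
move=> hy i j; rewrite /ell !mxE.
by case: (ord2_cases i) => ->; case: (ord2_cases j) => -> /=; rewrite ?subrr ?subr0; (try by left).
Qed.

Lemma close_wu n z z' : vge (z' - z) n -> close_mx n (wu z') (wu z).
Proof.
move=> hz i j; rewrite /wu !mxE.
by case: (ord2_cases i) => ->; case: (ord2_cases j) => -> /=; rewrite ?subrr; (try by left).
Qed.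

Lemma V'_nice g : V g -> g 1%:M = 0 -> nice (fun z => g (wu z)).
Proof.
move=> hg g1; have [z0 [e lc]] := hg; split.
- move=> z; have [n hn] := lc _ (inG_wu z).
  exists n => z' hz; apply: hn; [exact: inG_wu | exact: close_wu].
- have [n hn] := lc _ (inG1 F).
  exists (- n) => z hz.
  have z0' : z != 0 by apply/eqP => e0; apply: hz; rewrite e0; left.
  have hy : vge z^-1 n.
    right; rewrite vV //; have := vge_v_lt z0' hz; lia.
  have := hn _ (inG_ell _) (close_ell hy); rewrite g1.
  rewrite (V_EQ hg (inG_ell _)); last by rewrite /ell mk2_10 invr_eq0.
  rewrite /ell mk2_10 mk2_11 det_ell div1r invrK => /eqP.
  rewrite mulf_eq0 => /orP [|/eqP //].
  by rewrite (negbTE (chi_neq0 hchi _ _)) // ?invr_eq0 // mulN1r oppr_eq0.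
Qed.

Lemma V'_eq g : V g -> g 1%:M = 0 -> g = Gph (fun z => g (wu z)).
Proof.
move=> hg g1; apply: functional_extensionality => x.
have [z0 [e lc]] := hg.
rewrite /Gph.
case: (boolP (\det x != 0)) => hx; last first.
  by rewrite andbF z0 //; move=> h; rewrite h in hx.
rewrite andbT.
case: ifP => h10.
  by rewrite (V_EQ hg hx h10).
have hP : inP x by split => //; apply/eqP; apply/negbFE.
by rewrite (V_P hg hP) g1 mulr0.
Qed.

Lemma Gph_lin (c : C) (phi1 phi2 : F -> C) :
  Gph (fun z => c * phi1 z + phi2 z) = fun x => c * Gph phi1 x + Gph phi2 x.
Proof.
apply: functional_extensionality => x; rewrite /Gph.
by case: ifP => _; [ring | rewrite mulr0 addr0].
Qed.

Lemma Gph_sum (I : Type) (r : seq I) (phis : I -> F -> C) :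
  Gph (fun z => \sum_(i <- r) phis i z) = fun x => \sum_(i <- r) Gph (phis i) x.
Proof.
apply: functional_extensionality => x; rewrite /Gph.
case: ifP => _; first by rewrite mulr_sumr.
by rewrite big1.
Qed.

Lemma Gph_ext (phi1 phi2 : F -> C) : (forall z, phi1 z = phi2 z) -> Gph phi1 = Gph phi2.
Proof. by move=> h; congr Gph; apply: functional_extensionality. Qed.

Lemma nice_lin (c : C) (phi1 phi2 : F -> C) : nice phi1 -> nice phi2 -> nice (fun z => c * phi1 z + phi2 z).
Proof.
move=> [l1 [N1 s1]] [l2 [N2 s2]]; split.
- move=> z; have [n1 h1] := l1 z; have [n2 h2] := l2 z.
  exists (Num.max n1 n2) => z' hz.
  by rewrite h1 ?h2 //; apply: vge_le hz; rewrite le_max lexx ?orbT.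
- exists (Num.min N1 N2) => z hz.
  rewrite s1 ?s2 ?mulr0 ?addr0 // => h; apply: hz; apply: vge_le h;
  by rewrite ge_min lexx ?orbT.
Qed.

Lemma nice_dil (phi : F -> C) (s : F) : s != 0 -> nice phi -> nice (fun z => phi (s * z)).
Proof.
move=> s0 [l1 [N1 s1]]; split.
- move=> z; have [n h] := l1 (s * z).
  exists (n - v s) => z' hz; apply: h.
  rewrite -mulrBr; apply: vge_le (vgeM (vge_v L s) hz); lia.
- exists (N1 - v s) => z hz; apply: s1 => h.
  have z0 : z != 0 by apply/eqP => e; apply: hz; rewrite e; left.
  apply: hz; case: h => [/eqP|h]; first by rewrite mulf_eq0 (negbTE s0) (negbTE z0).
  by right; move: h; rewrite vM //; lia.
Qed.

Definition ind (n : int) (z : F) : C := if `[< vge z n >] then 1 else 0.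

Lemma nice_ind n : nice (ind n).
Proof.
split.
- move=> z; case: (pselect (vge z n)) => hz.
    exists n => z' hz'; rewrite /ind.
    have hz'' : vge z' n by have := vgeD hz' hz; rewrite subrK.
    by case: asboolP => //; case: asboolP.
  have z0 : z != 0 by apply/eqP => e; apply: hz; rewrite e; left.
  exists (v z + 1) => z' hz'; have [z'0 vz'] := v_loc z0 hz'.
  rewrite /ind; case: asboolP; case: asboolP => //.
  move=> _ h; exfalso; apply: hz; right; case: h => [/eqP|]; first by rewrite (negbTE z'0).
  by rewrite vz'.
- by exists n => z hz; rewrite /ind; case: asboolP.
Qed.


End Ind2.


Section Main.
Variables (p : nat) (F : fieldType) (L : nonarch_local_field F p).
Variables (C : fieldType) (chi : F -> F -> C) (hchi : smooth_character L chi).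
Local Notation v := (nlf_val L).
Local Notation vge := (vge L).
Local Notation V := (inInd L chi).
Local Notation close_mx := (close_mx L).
Local Notation nice := (nice L).
Local Notation Gph := (Gph chi).
Variable phi : ('M[F]_2 -> C) -> ('M[F]_2 -> C).
Hypothesis hV : forall f, V f -> V (phi f).
Hypothesis hlin : forall (c : C) f1 f2, V f1 -> V f2 ->
      phi (fun x => c * f1 x + f2 x) = (fun x => c * phi f1 x + phi f2 x).
Hypothesis hP : forall h f, inP h -> V f -> phi (rho h f) = rho h (phi f).

Lemma Phi0 : phi (fun _ => 0) = fun _ => 0.
Proof.
have := hlin 1 (V0 L chi) (V0 L chi).
rewrite (_ : (fun x : 'M[F]_2 => 1 * 0 + 0) = fun _ => 0); last first.
  by apply: functional_extensionality => x; rewrite mulr0 addr0.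
move=> e; apply: functional_extensionality => x.
have := congr1 (fun f => f x) e => /= /eqP.
by rewrite mul1r -subr_eq0 opprD addrA subrr add0r oppr_eq0 => /eqP.
Qed.

Lemma Phi_scale (c : C) f : V f -> phi (fun x => c * f x) = fun x => c * phi f x.
Proof.
move=> hf; have := hlin c hf (V0 L chi); rewrite Phi0.
rewrite (_ : (fun x => c * f x + 0) = fun x => c * f x); last first.
  by apply: functional_extensionality => x; rewrite addr0.
move=> ->; apply: functional_extensionality => x; by rewrite addr0.
Qed.

Lemma Phi_add f1 f2 : V f1 -> V f2 -> phi (fun x => f1 x + f2 x) = fun x => phi f1 x + phi f2 x.
Proof.
move=> h1 h2; have := hlin 1 h1 h2.
rewrite (_ : (fun x => 1 * f1 x + f2 x) = fun x => f1 x + f2 x); last first.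
  by apply: functional_extensionality => x; rewrite mul1r.
move=> ->; apply: functional_extensionality => x; by rewrite mul1r.
Qed.

Lemma Phi_sum (I : Type) (r : seq I) (fs : I -> 'M[F]_2 -> C) : (forall i, V (fs i)) ->
  phi (fun x => \sum_(i <- r) fs i x) = fun x => \sum_(i <- r) phi (fs i) x.
Proof.
move=> h; elim: r => [|i r IH].
  rewrite (_ : (fun x => \sum_(i <- [::]) fs i x) = fun _ => 0); last first.
    by apply: functional_extensionality => x; rewrite big_nil.
  by rewrite Phi0; apply: functional_extensionality => x; rewrite big_nil.
rewrite (_ : (fun x => \sum_(j <- i :: r) fs j x) = fun x => fs i x + \sum_(j <- r) fs j x); last first.
  by apply: functional_extensionality => x; rewrite big_cons.
rewrite Phi_add ?IH //; last exact: V_sum.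
by apply: functional_extensionality => x; rewrite big_cons.
Qed.

Lemma Phi_equiv b f x : inP b -> V f -> phi f (x *m b) = phi (rho b f) x.
Proof. by move=> hb hf; rewrite hP. Qed.

Definition w : 'M[F]_2 := wu 0.

Lemma inP_diag (a d : F) : a != 0 -> d != 0 -> inP (mk2 a 0 0 d).
Proof.
move=> a0 d0; split; last by rewrite mk2_10.
by rewrite /inG det2 !mk2_00 !mk2_01 !mk2_10 !mk2_11 mulr0 subr0 mulf_neq0.
Qed.

Lemma w_diag (a d : F) : w *m mk2 a 0 0 d = mk2 d 0 0 a *m w.
Proof. by apply: mx2P; rewrite !mulmx2E /w /wu ?mk2_00 ?mk2_01 ?mk2_10 ?mk2_11; ring. Qed.

Lemma Gph_rho_diag (phi0 : F -> C) (s : F) : s != 0 ->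
  rho (mk2 1 0 0 s) (Gph phi0) = fun x => chi s 1 * Gph (fun z => phi0 (s * z)) x.
Proof.
move=> s0; apply: functional_extensionality => x; rewrite /rho /Gph.
rewrite det_mulmx !mulmx2E !mk2_00 !mk2_01 !mk2_10 !mk2_11 !mulr0 !mulr1 !addr0 add0r.
have -> : \det (mk2 1 0 0 s) = s by rewrite det2 !mk2_00 !mk2_01 !mk2_10 !mk2_11; ring.
rewrite mulf_eq0 (negbTE s0) orbF.
case: ifP => /andP; last by rewrite mulr0.
move=> [h10 hd]; rewrite mulrA -(chiM hchi) //; last first.
  by rewrite mulf_neq0 ?invr_eq0 // oppr_eq0.
  exact: oner_neq0.
congr (chi _ _ * phi0 _); [field; by rewrite h10 | by rewrite mul1r | field; by rewrite h10].
Qed.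

Lemma nu_dil (phi0 : F -> C) (s : F) : s != 0 -> nice phi0 ->
  phi (Gph (fun z => phi0 (s * z))) w = phi (Gph phi0) w.
Proof.
move=> s0 hn.
have hG := Gph_nice hchi hn.
have hGs := Gph_nice hchi (nice_dil s0 hn).
have ht := inP_diag (oner_neq0 F) s0.
have e1 := Phi_equiv w ht hG.
rewrite Gph_rho_diag // Phi_scale // w_diag in e1.
have [_ [e _]] := hV hG.
have e2 := e (mk2 s 0 0 1) w (inP_diag s0 (oner_neq0 F)) (inG_wu 0).
rewrite e2 !mk2_00 !mk2_11 in e1.
apply: (mulfI (chi_neq0 hchi s0 (oner_neq0 F))); by rewrite -e1.
Qed.

Hypothesis hp0 : (p%:R : C) = 0.

Lemma nu_zero (psi : F -> C) (n0 : int) : nice psi -> (forall z, vge z n0 -> psi z = 0) ->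
  phi (Gph psi) w = 0.
Proof.
move=> hn hz0; have [hLC [N hN]] := hn.
have [m hm] := @UC F p L C psi 0 hLC (ex_intro _ N hN).
set r := (`|m - N|.+1)%N.
have r1 : (1 <= r)%N by [].
have [A [hA1 [hA2 hA3]]] := mult_domain L r1.
set s := sm L r.
have s0 : s != 0 := sm_neq0 L r1.
have hinv : forall z, psi (s * z) = psi z.
  move=> z; case: (pselect (vge z N)) => hz.
    rewrite /s /sm mulrDl mul1r hm //.
    apply: vge_le (vgeM (vge_pir L r) hz); rewrite /r; lia.
  rewrite !hN // => h.
  have z0 : z != 0 by apply/eqP => e; apply: hz; rewrite e; left.
  apply: hz; case: h => [/eqP|h]; first by rewrite mulf_eq0 (negbTE s0) (negbTE z0).
  by right; move: h; rewrite vM // v_sm // add0r.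
have hinvj : forall j z, psi (s ^+ j * z) = psi z.
  by elim=> [|j IH] z; rewrite ?expr0 ?mul1r // exprS -mulrA hinv IH.
set k := fun z => if A z then psi z else 0.
have A0 : A 0 = false by apply/negP => /hA2; rewrite eqxx.
have hk : nice k.
  split.
  - move=> z; case: (eqVneq z 0) => [->|z0].
      exists n0 => z' hz'; rewrite /k /= A0; case: ifP => // _.
      by apply: hz0; rewrite subr0 in hz'.
    have [n hn'] := hLC z.
    exists (Num.max n (v z + r%:Z + 1)) => z' hz'.
    have hR : Rm L r z z' by right; split => //; apply: vge_le hz'; rewrite le_max lexx orbT.
    have eA : A z' = A z.
      apply/idP/idP => [h|h]; [apply: (hA1 z' z) => //; exact: Rm_sym | exact: hA1 hR h].
    by rewrite /k eA hn' //; apply: vge_le hz'; rewrite le_max lexx.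
  - by exists N => z hz; rewrite /k /= hN //; case: ifP.
have dec : forall z, psi z = \sum_(j < p) k (s ^+ j * z).
  move=> z; case: (eqVneq z 0) => [->|z0].
    rewrite hz0; last by left.
    by rewrite big1 // => j _; rewrite mulr0 /k /= A0.
  have [i [hi hAi hu]] := hA3 z z0.
  rewrite (bigD1 (Ordinal hi)) //= big1 ?addr0.
    by rewrite /k /= hAi hinvj.
  move=> j /eqP hj; rewrite /k /=; case: ifP => // hAj.
  by exfalso; apply: hj; apply: val_inj => /=; apply: hu.
have eG : Gph psi = fun x => \sum_(j < p) Gph (fun z => k (s ^+ j * z)) x.
  by rewrite -Gph_sum; apply: Gph_ext.
have sj0 : forall j, s ^+ j != 0 by move=> j; apply: expf_neq0.
rewrite eG Phi_sum; last by move=> j; apply: (Gph_nice hchi); apply: nice_dil.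
under eq_bigr => j _ do rewrite nu_dil //.
by rewrite sumr_const card_ord -mulr_natr hp0 mulr0.
Qed.

Lemma V_vanish hh : V hh -> (forall z, hh (wu z) = 0) -> forall x, hh x = 0.
Proof.
move=> hv hw.
have [z0 [e lc]] := hv.
have big : forall x, inG x -> x 1 0 != 0 -> hh x = 0.
  by move=> x hx h10; rewrite (V_EQ hv hx h10) hw mulr0.
have h1 : hh 1%:M = 0.
  have [n hn] := lc _ (inG1 F).
  set y := upi L ^+ `|n|%N.
  have y0 : y != 0 by apply: upi_expn_neq0.
  have hy : vge y n by right; rewrite v_upi_expn; lia.
  rewrite -(hn _ (inG_ell y) (close_ell hy)); apply: big; first exact: inG_ell.
  by rewrite /ell mk2_10.
move=> x; case: (pselect (inG x)) => hx; last exact: z0.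
case: (eqVneq (x 1 0) 0) => h10; last exact: big.
have hP' : inP x by split.
by rewrite (V_P hv hP') h1 mulr0.
Qed.

Definition c0 := phi (Gph (ind L C 0)) w.

Lemma ind_dil n z : ind L C n z = ind L C 0 (upi L ^ (- n) * z).
Proof.
rewrite /ind; congr (if _ then _ else _); apply: asbool_equiv_eq.
case: (eqVneq z 0) => [->|z0]; first by rewrite mulr0; split => _; left.
have hu := upiz_neq0 L (- n).
rewrite !vgeP ?mulf_neq0 // vM // v_upiz; lia.
Qed.

Lemma B3 g : V g -> g 1%:M = 0 -> phi g w = c0 * g w.
Proof.
move=> hg g1.
set ph := fun z => g (wu z).
have hn := V'_nice hchi hg g1.
have eg := V'_eq hg g1.
have [hLC _] := hn.
have [n0 hn0] := hLC 0.
set psi := fun z => (- ph 0) * ind L C n0 z + ph z.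
have hpsi : nice psi := nice_lin (- ph 0) (nice_ind L C n0) hn.
have hpsi0 : forall z, vge z n0 -> psi z = 0.
  move=> z hz; rewrite /psi /ind; case: asboolP => // _.
  by rewrite /ph mulr1 (hn0 z) ?subr0 // addNr.
have eph : Gph ph = Gph (fun z => ph 0 * ind L C n0 z + psi z).
  by apply: Gph_ext => z; rewrite /psi; ring.
have -> : g w = ph 0 by [].
rewrite {1}eg eph Gph_lin hlin; last exact: (Gph_nice hchi).
  2: exact: (Gph_nice hchi (nice_ind L C n0)).
rewrite (nu_zero hpsi hpsi0) addr0 mulrC; congr (_ * _).
rewrite /c0 -(@nu_dil (ind L C 0) (upi L ^ (- n0))); last exact: nice_ind.
  by congr (phi _ w); apply: Gph_ext => z; rewrite ind_dil.
exact: upiz_neq0.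
Qed.

Definition umx (z : F) : 'M[F]_2 := mk2 1 z 0 1.

Lemma inP_umx z : inP (umx z).
Proof.
split; last by rewrite /umx mk2_10.
by rewrite /inG det2 /umx !mk2_00 !mk2_01 !mk2_10 !mk2_11 mulr0 subr0 mulr1 oner_neq0.
Qed.

Lemma w_umx z : w *m umx z = wu z.
Proof. by apply: mx2P; rewrite !mulmx2E /w /wu /umx ?mk2_00 ?mk2_01 ?mk2_10 ?mk2_11; ring. Qed.

Lemma B4 g : V g -> g 1%:M = 0 -> phi g = fun x => c0 * g x.
Proof.
move=> hg g1.
have hwz : forall z, phi g (wu z) = c0 * g (wu z).
  move=> z; have hu := inP_umx z.
  have hgu : V (rho (umx z) g) := V_rho (inP_inG hu) hg.
  have gu1 : rho (umx z) g 1%:M = 0.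
    by rewrite /rho mul1mx (V_P hg hu) g1 mulr0.
  by have := B3 hgu gu1; rewrite hP // /rho w_umx.
set hh := fun x => (- c0) * g x + phi g x.
have hvh : V hh by apply: V_lin => //; apply: hV.
have := V_vanish hvh; rewrite /hh => H.
apply: functional_extensionality => x.
have /eqP := H (fun z => ltac:(rewrite hwz; ring)) x.
by rewrite addrC addr_eq0 mulNr opprK => /eqP.
Qed.

Definition f0 := rho w (Gph (ind L C 0)).

Lemma f0V : V f0.
Proof. exact: V_rho (inG_wu 0) (Gph_nice hchi (nice_ind L C 0)). Qed.

Lemma f01 : f0 1%:M = 1.
Proof.
rewrite /f0 /rho mul1mx /Gph det_wu /w /wu mk2_10 mk2_11 oner_neq0 oppr_eq0 oner_neq0 /=.
rewrite divr1 opprK mul0r /ind.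
case: asboolP => [_|h]; last by exfalso; apply: h; left.
by rewrite mulr1 (chi11 hchi).
Qed.

Definition hh0 := fun x => (- c0) * f0 x + phi f0 x.

Lemma hh0V : V hh0.
Proof. by apply: V_lin; [exact: f0V | apply: hV; exact: f0V]. Qed.

Lemma hh0_right b x : inP b -> hh0 (x *m b) = chi (b 0 0) (b 1 1) * hh0 x.
Proof.
move=> hb.
set gb := fun x => (- chi (b 0 0) (b 1 1)) * f0 x + rho b f0 x.
have hgb : V gb by apply: V_lin; [exact: f0V | apply: V_rho (inP_inG hb) f0V].
have gb1 : gb 1%:M = 0 by rewrite /gb /rho mul1mx (V_P f0V hb) f01; ring.
have e := B4 hgb gb1.
rewrite /gb hlin in e; [|exact: f0V|exact: V_rho (inP_inG hb) f0V].
have := congr1 (fun f => f x) e; rewrite /= (hP hb f0V) /rho /hh0 => e'.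
have -> : phi f0 (x *m b) = c0 * (- chi (b 0 0) (b 1 1) * f0 x + f0 (x *m b))
   + chi (b 0 0) (b 1 1) * phi f0 x by rewrite -e'; ring.
ring.
Qed.

Hypothesis hs : ~ char_eq chi (chi_s chi).

Lemma hh0_w : hh0 w = 0.
Proof.
have [a [d [a0 [d0 hne]]]] : exists a d, a != 0 /\ d != 0 /\ chi a d != chi d a.
  apply: NNPP => hn; apply: hs => a d a0 d0; apply: NNPP => hne; apply: hn.
  by exists a, d; split => //; split => //; apply/eqP.
have h1 := hh0_right w (inP_diag a0 d0).
rewrite !mk2_00 !mk2_11 w_diag in h1.
have [_ [e _]] := hh0V.
rewrite e ?mk2_00 ?mk2_11 in h1; [|exact: inP_diag|exact: inG_wu].
apply/eqP; move/eqP: h1; rewrite -subr_eq0 -mulrBl mulf_eq0 subr_eq0 eq_sym (negbTE hne) /=.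
by [].
Qed.

Lemma Phi_f0 : phi f0 = fun x => c0 * f0 x.
Proof.
have H := V_vanish hh0V.
have hz : forall z, hh0 (wu z) = 0.
  move=> z; rewrite -w_umx hh0_right; last exact: inP_umx.
  by rewrite hh0_w mulr0.
apply: functional_extensionality => x.
have /eqP := H hz x; rewrite /hh0 addrC addr_eq0 mulNr opprK => /eqP.
by [].
Qed.

Lemma Phi_scalar f : V f -> phi f = fun x => c0 * f x.
Proof.
move=> hf.
set g := fun x => (- f 1%:M) * f0 x + f x.
have hg : V g by apply: V_lin => //; exact: f0V.
have g1 : g 1%:M = 0 by rewrite /g f01 mulr1 addNr.
have e := B4 hg g1.
rewrite /g hlin // in e; last exact: f0V.
rewrite Phi_f0 in e.
apply: functional_extensionality => x.
have := congr1 (fun f => f x) e => /= /eqP.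
rewrite -subr_eq0 => /eqP e'.
by apply/eqP; rewrite -subr_eq0; rewrite -e'; apply/eqP; ring.
Qed.

End Main.


Theorem corollary5p3 (p : nat) (F : fieldType) (L : nonarch_local_field F p)
  (C : closedFieldType) (hCchar : p \in [pchar C])
  (hCalg : forall x : C, exists n : nat, (0 < n)%N /\ x ^+ (p ^ n) = x)
  (chi : F -> F -> C) (hchi : smooth_character L chi)
  (hs : ~ char_eq chi (chi_s chi))
  (phi : ('M[F]_2 -> C) -> ('M[F]_2 -> C)) :
  isHom L chi (@inP F) phi <-> isHom L chi (@inG F) phi.
Proof.
split.
- move=> [hV [hlin hP]]; split; first exact: hV.
  split; first exact: hlin.
  move=> h f hh hf.
  have hp0 : (p%:R : C) = 0 := pcharf0 hCchar.
  rewrite (Phi_scalar hchi hV hlin hP hp0 hs hf).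
  rewrite (Phi_scalar hchi hV hlin hP hp0 hs (V_rho hh hf)).
  by apply: functional_extensionality => x.
- move=> [hV [hlin hG]]; split; first exact: hV.
  split; first exact: hlin.
  move=> h f hh hf; apply: hG => //; exact: inP_inG.
Qed.
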